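(* Let $b>0$, let $h:[0,b]\to[0,\infty)$ be a concave function that is not identically zero, let $\alpha,\beta>0$, and let $\mathrm{g}_\alpha(h)=\frac{\int_0^b t h(t)^\alpha dt}{\int_0^b h(t)^\alpha dt}$. Then there exist $\gamma<\delta$ and $c>0$ such that the function $g(t)=c(\delta-t)$ on $[\gamma,\delta]$ satisfies: (i) $g(\mathrm{g}_\alpha(h))=h(\mathrm{g}_\alpha(h))$; (ii) $\int_\gamma^\delta g(t)^\beta dt=\int_0^b h(t)^\beta dt$; (iii) $\int_{\mathrm{g}_\alpha(h)}^\delta g(t)^\beta dt=\int_{\mathrm{g}_\alpha(h)}^b h(t)^\beta dt$. Moreover, $0\leq\gamma\leq\mathrm{g}_\alpha(h)\leq b\leq\delta$, and, extending $h$ by $0$ on $(b,\delta]$ and $g$ by $0$ on $[0,\gamma)$, one has $\int_s^\delta h(t)^\beta dt\leq\int_s^\delta g(t)^\beta dt$ for every $s\in[0,\delta]$. *)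

(* Defs.v *)
From Stdlib Require Import Reals.
From Coquelicot Require Import Coquelicot.
Open Scope R_scope.

(* Real power with the convention 0^a = 0 (for a > 0): x^a for x > 0, 0 otherwise.
   Only applied to nonnegative arguments. *)
Definition rpow (x a : R) : R := if Rlt_dec 0 x then Rpower x a else 0.

Definition concave_on (a b : R) (h : R -> R) : Prop :=
  forall x y l, a <= x <= b -> a <= y <= b -> 0 <= l <= 1 ->
    l * h x + (1 - l) * h y <= h (l * x + (1 - l) * y).

Definition galpha (alpha b : R) (h : R -> R) : R :=
  RInt (fun t => t * rpow (h t) alpha) 0 b / RInt (fun t => rpow (h t) alpha) 0 b.

Definition hext (b : R) (h : R -> R) (t : R) : R :=
  if Rle_dec t b then h t else 0.

Definition gext (gamma delta c : R) (t : R) : R :=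
  if Rlt_dec t gamma then 0 else c * (delta - t).

(* Main.v *)
Require Import Defs.
From Stdlib Require Import Reals Lra.
From Coquelicot Require Import Coquelicot.
Open Scope R_scope.
Ltac fixeq := match goal with |- ?a = ?b => change (@eq R a b) end.

Lemma loc_ball x (P : R->Prop) d : 0 < d -> (forall y, Rabs (y - x) < d -> P y) -> locally x P.
Proof. intros Hd H. exists (mkposreal d Hd). intros y Hy. apply H. exact Hy. Qed.

Lemma rpow_pos x a : 0 < x -> rpow x a = Rpower x a.
Proof. intros H; unfold rpow; destruct (Rlt_dec 0 x); [reflexivity| lra]. Qed.
Lemma rpow_npos x a : x <= 0 -> rpow x a = 0.
Proof. intros H; unfold rpow; destruct (Rlt_dec 0 x); [lra| reflexivity]. Qed.
Lemma rpow_ge0 x a : 0 <= rpow x a.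
Proof. unfold rpow; destruct (Rlt_dec 0 x); [unfold Rpower; left; apply exp_pos| lra]. Qed.
Lemma Rpower_gt0 x a : 0 < Rpower x a.
Proof. unfold Rpower; apply exp_pos. Qed.

Lemma rpow_lt x y a : 0 < a -> 0 <= x < y -> rpow x a < rpow y a.
Proof. intros Ha [H1 H2]. rewrite (rpow_pos y) by lra.
destruct H1 as [H1|H1]. rewrite rpow_pos by lra. apply Rlt_Rpower_l; lra.
subst. rewrite rpow_npos by lra. apply Rpower_gt0. Qed.

Lemma rpow_le x y a : 0 < a -> 0 <= x <= y -> rpow x a <= rpow y a.
Proof. intros Ha [H1 H2]. destruct H2 as [H2|H2]. left; apply rpow_lt; lra. subst; lra. Qed.

Lemma rpow_small eps a : 0 < a -> 0 < eps -> forall t, 0 < t < Rpower eps (/a) -> Rpower t a < eps.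
Proof. intros Ha He t [H1 H2].
assert (E: eps = Rpower (Rpower eps (/a)) a).
{ rewrite Rpower_mult. replace (/a * a) with 1 by (field; lra). rewrite Rpower_1; lra. }
rewrite E at 1. apply Rlt_Rpower_l; lra. Qed.

Lemma rpow_cont a x : 0 < a -> continuous (fun t => rpow t a) x.
Proof. intros Ha.
destruct (Rlt_dec 0 x) as [Hx|Hx].
- apply continuity_pt_filterlim. apply derivable_continuous_pt.
  exists (a * Rpower x (a - 1)). apply is_derive_Reals.
  apply is_derive_ext_loc with (fun t => Rpower t a).
  + apply loc_ball with x; [lra|]. intros y Hy. rewrite rpow_pos; [reflexivity|].
    apply Rabs_def2 in Hy; lra.
  + apply is_derive_Reals. apply derivable_pt_lim_power; lra.
- destruct (Rlt_dec x 0) as [Hx'|Hx'].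
  + apply continuous_ext_loc with (fun _ => 0).
    * apply loc_ball with (-x); [lra|]. intros y Hy. rewrite rpow_npos; [reflexivity|].
      apply Rabs_def2 in Hy; lra.
    * apply continuous_const.
  + assert (x = 0) by lra. subst x.
    apply continuity_pt_filterlim. apply continuity_pt_locally. intros eps.
    apply loc_ball with (Rpower eps (/a)). apply Rpower_gt0.
    intros y Hy. rewrite (rpow_npos 0) by lra. rewrite Rminus_0_r.
    destruct (Rlt_dec 0 y).
    * rewrite rpow_pos by lra. rewrite Rabs_pos_eq by (left; apply Rpower_gt0).
      apply rpow_small; try lra. apply (cond_pos eps). rewrite Rminus_0_r in Hy.
      rewrite Rabs_pos_eq in Hy; lra.
    * rewrite rpow_npos by lra. rewrite Rabs_R0. apply (cond_pos eps).
Qed.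

Lemma rpow_deriv k x : 1 < k -> is_derive (fun t => rpow t k) x (k * rpow x (k-1)).
Proof. intros Hk.
destruct (Rlt_dec 0 x) as [Hx|Hx].
- rewrite (rpow_pos x) by lra.
  apply is_derive_ext_loc with (fun t => Rpower t k).
  + apply loc_ball with x; [lra|]. intros y Hy. rewrite rpow_pos; [reflexivity|].
    apply Rabs_def2 in Hy; lra.
  + apply is_derive_Reals. apply derivable_pt_lim_power; lra.
- rewrite (rpow_npos x) by lra. rewrite Rmult_0_r.
  destruct (Rlt_dec x 0) as [Hx'|Hx'].
  + apply is_derive_ext_loc with (fun _ => 0).
    * apply loc_ball with (-x); [lra|]. intros y Hy. rewrite rpow_npos; [reflexivity|].
      apply Rabs_def2 in Hy; lra.
    * apply is_derive_Reals. apply derivable_pt_lim_const.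
  + assert (x = 0) by lra. subst x.
    apply is_derive_Reals. intros eps He.
    assert (Hd: 0 < Rpower eps (/(k-1))) by apply Rpower_gt0.
    exists (mkposreal _ Hd). intros hh Hh0 Hh. simpl in Hh.
    rewrite Rplus_0_l. rewrite (rpow_npos 0) by lra.
    destruct (Rlt_dec 0 hh).
    * rewrite rpow_pos by lra.
      replace (Rpower hh k) with (Rpower hh (k-1) * hh).
      2:{ rewrite <- (Rpower_1 hh) at 2 by lra. rewrite <- Rpower_plus. f_equal; ring. }
      replace ((Rpower hh (k - 1) * hh - 0) / hh - 0) with (Rpower hh (k-1)) by (field; lra).
      rewrite Rabs_pos_eq by (left; apply Rpower_gt0).
      apply rpow_small; try lra. rewrite Rabs_pos_eq in Hh; lra.
    * rewrite rpow_npos by lra. replace ((0 - 0) / hh - 0) with 0 by (field; lra).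
      rewrite Rabs_R0; lra.
Qed.

Lemma lin_deriv c D t : is_derive (fun t => c * (D - t)) t (- c).
Proof. auto_derive; auto. ring. Qed.

Lemma GI c D b a d : 0 < c -> 0 < b ->
  is_RInt (fun t => rpow (c*(D-t)) b) a d
   ((rpow (c*(D-a)) (b+1) - rpow (c*(D-d)) (b+1)) / (c*(b+1))).
Proof. intros Hc Hb.
set (f := fun t => (- / (c*(b+1))) * rpow (c*(D-t)) (b+1)).
assert (Hd: forall t, is_derive f t (rpow (c*(D-t)) b)).
{ intros t.
  assert (H := is_derive_comp (fun x => rpow x (b+1)) (fun t => c*(D-t)) t _ _
     (rpow_deriv (b+1) (c*(D-t)) ltac:(lra)) (lin_deriv c D t)).
  unfold scal in H; simpl in H; unfold mult in H; simpl in H.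
  replace (b+1-1) with b in H by ring.
  apply is_derive_Reals in H. apply is_derive_Reals.
  assert (H2 := derivable_pt_lim_scal _ (- / (c*(b+1))) _ _ H).
  unfold mult_real_fct in H2.
  replace (rpow (c * (D - t)) b) with (- / (c * (b + 1)) * (- c * ((b + 1) * rpow (c * (D - t)) b))).
  exact H2. field; lra. }
assert (H := is_RInt_derive f (fun t => rpow (c*(D-t)) b) a d (fun x _ => Hd x)
  (fun x _ => continuous_comp _ (fun y => rpow y b) x
     (ex_derive_continuous _ _ (ex_intro _ _ (lin_deriv c D x))) (rpow_cont b _ Hb))).
replace ((rpow (c*(D-a)) (b+1) - rpow (c*(D-d)) (b+1)) / (c*(b+1))) with (minus (f d) (f a)).
exact H. unfold f, minus, plus, opp; simpl. field. lra.
Qed.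

Lemma GI_R c D b a d : 0 < c -> 0 < b ->
  RInt (fun t => rpow (c*(D-t)) b) a d
   = (rpow (c*(D-a)) (b+1) - rpow (c*(D-d)) (b+1)) / (c*(b+1)).
Proof. intros; apply is_RInt_unique; apply GI; auto. Qed.

Lemma GI_ex c D b a d : 0 < c -> 0 < b -> ex_RInt (fun t => rpow (c*(D-t)) b) a d.
Proof. intros; eexists; apply GI; auto. Qed.

Section Conc.
Variables (b : R) (h : R -> R).
Hypothesis hb : 0 < b.
Hypothesis hconc : concave_on 0 b h.

Lemma chord u v w : 0 <= u -> u <= v -> v <= w -> w <= b ->
  (w-v) * h u + (v-u) * h w <= (w-u) * h v.
Proof. intros H1 H2 H3 H4.
destruct (Req_dec u w) as [E|E].
- subst. assert (v = w) by lra. subst. lra.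
- set (l := (w-v)/(w-u)).
  assert (Hl : 0 <= l <= 1).
  { unfold l; split. apply Rdiv_le_0_compat; lra.
    apply Rmult_le_reg_r with (w-u). lra. unfold Rdiv. rewrite Rmult_assoc, Rinv_l by lra. lra. }
  assert (Hv : l * u + (1 - l) * w = v) by (unfold l; field; lra).
  assert (H := hconc u w l ltac:(lra) ltac:(lra) Hl). rewrite Hv in H.
  assert (E1 : (w-v) = l * (w-u)) by (unfold l; field; lra).
  assert (E2 : (v-u) = (1-l) * (w-u)) by (unfold l; field; lra).
  rewrite E1, E2.
  replace (l * (w - u) * h u + (1 - l) * (w - u) * h w) with ((w-u) * (l * h u + (1 - l) * h w)) by ring.
  apply Rmult_le_compat_l; lra.
Qed.

Lemma h_cont x : 0 < x < b -> continuous h x.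
Proof. intros [Hx1 Hx2].
set (r := Rmin x (b-x) / 2).
assert (Hr : 0 < r /\ r < x /\ x + r < b).
{ unfold r. destruct (Rle_dec x (b-x)).
  rewrite Rmin_left by lra; lra. rewrite Rmin_right by lra; lra. }
set (A1 := h x - h (x-r)). set (A2 := h (x+r) - h x).
set (K := Rabs A1 + Rabs A2).
assert (HK : forall t, Rabs (t - x) < r -> r * Rabs (h t - h x) <= Rabs (t-x) * K).
{ intros t Ht. apply Rabs_def2 in Ht.
  assert (a1 := Rle_abs A1). assert (a2 := Rle_abs A2).
  assert (a1' := Rle_abs (-A1)). assert (a2' := Rle_abs (-A2)).
  rewrite Rabs_Ropp in a1', a2'.
  destruct (Rle_dec x t).
  - assert (c1 := chord (x-r) x t ltac:(lra) ltac:(lra) ltac:(lra) ltac:(lra)).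
    assert (c2 := chord x t (x+r) ltac:(lra) ltac:(lra) ltac:(lra) ltac:(lra)).
    rewrite (Rabs_pos_eq (t-x)) by lra.
    assert (P1 : (t - x) * A1 <= (t-x) * Rabs A1) by (apply Rmult_le_compat_l; lra).
    assert (P2 : (t - x) * (-A2) <= (t-x) * Rabs A2) by (apply Rmult_le_compat_l; lra).
    rewrite <- (Rabs_pos_eq r) by lra. rewrite <- Rabs_mult.
    apply Rabs_le. unfold K, A1, A2 in *. split; nra.
  - assert (c1 := chord (x-r) t x ltac:(lra) ltac:(lra) ltac:(lra) ltac:(lra)).
    assert (c2 := chord t x (x+r) ltac:(lra) ltac:(lra) ltac:(lra) ltac:(lra)).
    rewrite (Rabs_left (t-x)) by lra.
    assert (P1 : (x - t) * A1 <= (x-t) * Rabs A1) by (apply Rmult_le_compat_l; lra).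
    assert (P2 : (x - t) * (-A2) <= (x-t) * Rabs A2) by (apply Rmult_le_compat_l; lra).
    rewrite <- (Rabs_pos_eq r) by lra. rewrite <- Rabs_mult.
    apply Rabs_le. unfold K, A1, A2 in *. split; nra. }
apply continuity_pt_filterlim. apply continuity_pt_locally. intros eps.
assert (HK0 : 0 <= K) by (unfold K; assert (H1 := Rabs_pos A1); assert (H2:= Rabs_pos A2); lra).
assert (He := cond_pos eps).
apply loc_ball with (Rmin r (eps * r / (K+1))).
{ apply Rmin_glb_lt. lra. apply Rdiv_lt_0_compat; nra. }
intros y Hy. assert (Hy1 : Rabs (y - x) < r) by (eapply Rlt_le_trans; [exact Hy|apply Rmin_l]).
assert (Hy2 : Rabs (y - x) < eps * r / (K+1)) by (eapply Rlt_le_trans; [exact Hy|apply Rmin_r]).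
assert (H := HK y Hy1).
assert (Hy3 : Rabs (y-x) * (K+1) < eps * r).
{ apply Rmult_lt_reg_r with (/(K+1)). apply Rinv_0_lt_compat; lra.
  rewrite Rmult_assoc, Rinv_r by lra. rewrite Rmult_1_r. exact Hy2. }
assert (Hp := Rabs_pos (y-x)).
apply Rmult_lt_reg_l with r. lra. nra.
Qed.

Lemma h_pos (hnonneg : forall t, 0 <= t <= b -> 0 <= h t)
  (hnz : exists t, 0 <= t <= b /\ h t <> 0) x : 0 < x < b -> 0 < h x.
Proof. intros Hx. destruct hnz as [t0 [Ht0 Hn]].
assert (H0 : 0 < h t0) by (destruct (hnonneg t0 Ht0); [auto|congruence]).
assert (Hb' := hnonneg b ltac:(lra)). assert (H0' := hnonneg 0 ltac:(lra)).
destruct (Rle_dec t0 x).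
- assert (c := chord t0 x b ltac:(lra) ltac:(lra) ltac:(lra) ltac:(lra)). nra.
- assert (c := chord 0 x t0 ltac:(lra) ltac:(lra) ltac:(lra) ltac:(lra)). nra.
Qed.

End Conc.

Lemma frac_le n d : n <= 0 -> 0 < d -> n / d <= 0.
Proof. intros. unfold Rdiv. assert (0 < / d) by (apply Rinv_0_lt_compat; auto). nra. Qed.

Section Lim.
Variables (b : R) (h : R -> R).
Hypothesis hb : 0 < b.
Hypothesis hconc : concave_on 0 b h.

Lemma lim0 : exists L, forall eps, 0 < eps -> exists eta, 0 < eta /\
  forall t, 0 < t < eta -> Rabs (h t - L) < eps.
Proof.
set (S := fun t => (h b - h t) / (b - t)).
assert (Sub : forall t, 0 < t < b -> S t <= S 0).
{ intros t Ht. assert (c := chord b h hconc 0 t b ltac:(lra) ltac:(lra) ltac:(lra) ltac:(lra)).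
  assert (E : S t - S 0 = ((b-t)*h 0 + t * h b - b * h t) / ((b-t)*b)) by (unfold S; field; lra).
  assert (S t - S 0 <= 0). rewrite E. apply frac_le. lra. nra. lra. }
assert (Smon : forall t1 t2, 0 < t1 <= t2 -> t2 < b -> S t2 <= S t1).
{ intros t1 t2 H1 H2. assert (c := chord b h hconc t1 t2 b ltac:(lra) ltac:(lra) ltac:(lra) ltac:(lra)).
  assert (E : S t2 - S t1 = (h b * (t2-t1) + h t1 * (b-t2) - h t2 * (b - t1)) / ((b-t1)*(b-t2)))
    by (unfold S; field; lra).
  assert (S t2 - S t1 <= 0). rewrite E. apply frac_le. lra. nra. lra. }
set (E := fun s => exists t, 0 < t < b /\ s = S t).
destruct (completeness E) as [sg [Hub Hlub]].
{ exists (S 0). intros s [t [Ht ->]]. apply Sub; auto. }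
{ exists (S (b/2)). exists (b/2). split; [lra|reflexivity]. }
assert (Sle : forall t, 0 < t < b -> S t <= sg) by (intros t Ht; apply Hub; exists t; auto).
assert (Sapp : forall e, 0 < e -> exists t0, 0 < t0 < b /\ sg - e < S t0).
{ intros e He. apply Classical_Prop.NNPP. intros Hn.
  assert (sg <= sg - e). apply Hlub. intros s [t [Ht ->]].
  apply Rnot_lt_le. intros Hc. apply Hn. exists t; auto. lra. }
exists (h b - sg * b). intros eps He.
destruct (Sapp (eps / (2*b))) as [t0 [Ht0 Hs0]]. apply Rdiv_lt_0_compat; lra.
set (M := Rabs sg + Rabs (S t0) + 1).
assert (HM : 0 < M) by (unfold M; assert (H1 := Rabs_pos sg); assert (H2:= Rabs_pos (S t0)); lra).
exists (Rmin t0 (eps / (2*M))). split.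
{ apply Rmin_glb_lt; [lra|]. apply Rdiv_lt_0_compat; lra. }
intros t [Ht1 Ht2].
assert (Ht3 : t < t0) by (eapply Rlt_le_trans; [exact Ht2|apply Rmin_l]).
assert (Ht4 : t < eps / (2*M)) by (eapply Rlt_le_trans; [exact Ht2|apply Rmin_r]).
assert (St1 : S t0 <= S t) by (apply Smon; lra).
assert (St2 : S t <= sg) by (apply Sle; lra).
assert (Eh : h t - (h b - sg * b) = (sg - S t) * b + S t * t) by (unfold S; field; lra).
rewrite Eh.
assert (A1 : (sg - S t) * b < eps / 2).
{ assert (sg - S t < eps / (2*b)) by lra.
  apply Rmult_lt_compat_r with (r := b) in H; [|lra].
  replace (eps / (2*b) * b) with (eps/2) in H by (field; lra). lra. }
assert (A2 : Rabs (S t) <= M - 1).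
{ unfold M. apply Rabs_le. split.
  - assert (H1 := Rle_abs (- S t0)). rewrite Rabs_Ropp in H1. assert (H2 := Rabs_pos sg). lra.
  - assert (H1 := Rle_abs sg). assert (H2 := Rabs_pos (S t0)). lra. }
assert (A3 : Rabs (S t * t) < eps / 2).
{ rewrite Rabs_mult, (Rabs_pos_eq t) by lra.
  assert (Rabs (S t) * t <= (M-1) * t) by (apply Rmult_le_compat_r; lra).
  assert (M * t < eps / 2).
  { apply Rmult_lt_compat_l with (r := M) in Ht4; [|lra].
    replace (M * (eps / (2*M))) with (eps/2) in Ht4 by (field; lra). lra. }
  nra. }
assert (A4 : 0 <= (sg - S t) * b) by nra.
eapply Rle_lt_trans. apply Rabs_triang. rewrite Rabs_pos_eq by lra. lra.
Qed.

End Lim.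

Lemma conc_refl b h : concave_on 0 b h -> concave_on 0 b (fun t => h (b - t)).
Proof. intros H x y l Hx Hy Hl. simpl.
replace (b - (l * x + (1 - l) * y)) with (l * (b-x) + (1-l) * (b-y)) by ring.
apply H; lra. Qed.

Lemma limb b h : 0 < b -> concave_on 0 b h -> exists L, forall eps, 0 < eps -> exists eta, 0 < eta /\
  forall t, b - eta < t < b -> Rabs (h t - L) < eps.
Proof. intros hb hc. destruct (lim0 b (fun t => h (b - t)) hb (conc_refl b h hc)) as [L HL].
exists L. intros eps He. destruct (HL eps He) as [eta [He1 He2]]. exists eta. split; auto.
intros t Ht. replace t with (b - (b - t)) by ring. apply He2. lra. Qed.

Lemma Chas (f : R -> R) a b c : ex_RInt f a b -> ex_RInt f b c -> RInt f a b + RInt f b c = RInt f a c.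
Proof. intros H1 H2. exact (RInt_Chasles f a b c H1 H2). Qed.

Lemma ex_sub (f : R -> R) a b c d : a <= c -> c <= d -> d <= b -> ex_RInt f a b -> ex_RInt f c d.
Proof. intros H1 H2 H3 H.
apply (ex_RInt_Chasles_1 (V:=R_CompleteNormedModule) f c d b). lra.
apply (ex_RInt_Chasles_2 (V:=R_CompleteNormedModule) f a c b). lra. exact H. Qed.

Lemma RInt_lin u (f g : R -> R) a d : ex_RInt f a d -> ex_RInt g a d ->
  RInt (fun t => u * f t - g t) a d = u * RInt f a d - RInt g a d.
Proof. intros Hf Hg.
assert (H := RInt_minus (V:=R_CompleteNormedModule) (fun t => scal u (f t)) g a d
  (ex_RInt_scal (V:=R_NormedModule) f a d u Hf) Hg).
assert (H2 := RInt_scal (V:=R_CompleteNormedModule) f a d u Hf).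
unfold minus, plus, opp, scal in H, H2; simpl in H, H2. unfold mult in H, H2; simpl in H, H2.
rewrite H2 in H. exact H. Qed.

Lemma int_pos (f : R -> R) a d : a < d -> ex_RInt f a d -> (forall x, a < x < d -> 0 < f x) ->
  (forall x, a < x < d -> continuous f x) -> 0 < RInt f a d.
Proof. intros Had He Hp Hc.
set (a' := a + (d-a)/4). set (d' := d - (d-a)/4).
assert (Ha' : a < a' < d' /\ d' < d) by (unfold a', d'; lra).
rewrite <- (Chas f a a' d). rewrite <- (Chas f a' d' d).
assert (0 <= RInt f a a'). { apply RInt_ge_0. lra. apply ex_sub with a d; try lra; auto.
  intros x Hx. left; apply Hp; lra. }
assert (0 <= RInt f d' d). { apply RInt_ge_0. lra. apply ex_sub with a d; try lra; auto.
  intros x Hx. left; apply Hp; lra. }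
assert (0 < RInt f a' d'). { apply RInt_gt_0. lra. intros; apply Hp; lra.
  intros; apply Hc; lra. }
lra.
all: apply ex_sub with a d; try lra; auto.
Qed.

Lemma rint_ge0 (f : R -> R) a d : a <= d -> ex_RInt f a d -> (forall x, a < x < d -> 0 <= f x) -> 0 <= RInt f a d.
Proof. intros; apply RInt_ge_0; auto. Qed.

Section Ext.
Variables (b : R) (h : R -> R).
Hypothesis hb : 0 < b.
Hypothesis hconc : concave_on 0 b h.

Lemma ext_exists : exists he : R -> R, (forall x, 0 < x < b -> he x = h x) /\
  (forall x, 0 <= x <= b -> continuous he x).
Proof.
destruct (lim0 b h hb hconc) as [L0 H0]. destruct (limb b h hb hconc) as [Lb Hb].
exists (fun t => if Rle_dec t 0 then L0 else if Rle_dec b t then Lb else h t).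
split.
{ intros x Hx. destruct (Rle_dec x 0); [lra|]. destruct (Rle_dec b x); [lra|]. reflexivity. }
intros x Hx.
destruct (Req_dec x 0) as [E|E].
{ subst x. apply continuity_pt_filterlim. apply continuity_pt_locally. intros eps.
  destruct (H0 eps (cond_pos eps)) as [eta [He1 He2]].
  apply loc_ball with (Rmin eta b). apply Rmin_glb_lt; lra.
  intros y Hy. assert (Hy1 : Rabs (y - 0) < eta) by (eapply Rlt_le_trans; [exact Hy|apply Rmin_l]).
  assert (Hy2 : Rabs (y - 0) < b) by (eapply Rlt_le_trans; [exact Hy|apply Rmin_r]).
  rewrite Rminus_0_r in Hy1, Hy2. apply Rabs_def2 in Hy1. apply Rabs_def2 in Hy2.
  destruct (Rle_dec 0 0); [|lra].
  destruct (Rle_dec y 0). rewrite Rminus_diag, Rabs_R0. apply cond_pos.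
  destruct (Rle_dec b y); [lra|]. apply He2. lra. }
destruct (Req_dec x b) as [E'|E'].
{ subst x. apply continuity_pt_filterlim. apply continuity_pt_locally. intros eps.
  destruct (Hb eps (cond_pos eps)) as [eta [He1 He2]].
  apply loc_ball with (Rmin eta b). apply Rmin_glb_lt; lra.
  intros y Hy. assert (Hy1 : Rabs (y - b) < eta) by (eapply Rlt_le_trans; [exact Hy|apply Rmin_l]).
  assert (Hy2 : Rabs (y - b) < b) by (eapply Rlt_le_trans; [exact Hy|apply Rmin_r]).
  apply Rabs_def2 in Hy1. apply Rabs_def2 in Hy2.
  destruct (Rle_dec b 0); [lra|]. destruct (Rle_dec b b); [|lra].
  destruct (Rle_dec y 0); [lra|].
  destruct (Rle_dec b y). rewrite Rminus_diag, Rabs_R0. apply cond_pos.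
  apply He2. lra. }
apply continuous_ext_loc with h.
- apply loc_ball with (Rmin x (b-x)). apply Rmin_glb_lt; lra.
  intros y Hy. assert (Hy1 : Rabs (y - x) < x) by (eapply Rlt_le_trans; [exact Hy|apply Rmin_l]).
  assert (Hy2 : Rabs (y - x) < b - x) by (eapply Rlt_le_trans; [exact Hy|apply Rmin_r]).
  apply Rabs_def2 in Hy1. apply Rabs_def2 in Hy2.
  destruct (Rle_dec y 0); [lra|]. destruct (Rle_dec b y); [lra|]. reflexivity.
- apply h_cont with b; auto; lra.
Qed.

Lemma int_hq (q : R -> R) p : 0 < p -> (forall x, continuous q x) ->
  ex_RInt (fun t => q t * rpow (h t) p) 0 b.
Proof. intros Hp Hq. destruct ext_exists as [he [E1 E2]].
apply ex_RInt_ext with (fun t => q t * rpow (he t) p).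
{ intros x Hx. rewrite Rmin_left, Rmax_right in Hx by lra. rewrite E1; auto. }
apply (ex_RInt_continuous (V:=R_CompleteNormedModule)). intros z Hz. rewrite Rmin_left, Rmax_right in Hz by lra.
apply (continuous_mult q (fun t => rpow (he t) p)). apply Hq.
apply (continuous_comp he (fun y => rpow y p)). apply E2; auto. apply rpow_cont; auto.
Qed.

Lemma int_h p : 0 < p -> ex_RInt (fun t => rpow (h t) p) 0 b.
Proof. intros Hp. apply ex_RInt_ext with (fun t => 1 * rpow (h t) p).
- intros x _. simpl. ring.
- apply int_hq; auto. intros; apply continuous_const. Qed.

Lemma int_th p : 0 < p -> ex_RInt (fun t => t * rpow (h t) p) 0 b.
Proof. intros Hp. apply int_hq with (q := fun t => t); auto. intros; apply continuous_id. Qed.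

Lemma cont_hp p x : 0 < p -> 0 < x < b -> continuous (fun t => rpow (h t) p) x.
Proof. intros Hp Hx. apply (continuous_comp h (fun y => rpow y p)). apply h_cont with b; auto; lra. apply rpow_cont; auto. Qed.

End Ext.

Lemma rpow_succ x a : 0 <= x -> rpow x (a+1) = x * rpow x a.
Proof. intros [H|H].
- rewrite !rpow_pos by lra. rewrite Rpower_plus, Rpower_1 by lra. ring.
- subst. rewrite !rpow_npos by lra. ring. Qed.

Lemma rpow_gt0 x a : 0 < x -> 0 < rpow x a.
Proof. intros; rewrite rpow_pos by auto; apply Rpower_gt0. Qed.

Lemma RInt_zero a d : RInt (fun _ => 0) a d = 0.
Proof. rewrite RInt_const. unfold scal; simpl; unfold mult; simpl. ring. Qed.

Lemma ex_lin u (f g : R -> R) a d : ex_RInt f a d -> ex_RInt g a d ->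
  ex_RInt (fun t => u * f t - g t) a d.
Proof. intros Hf Hg.
exact (ex_RInt_minus (V:=R_NormedModule) (fun t => scal u (f t)) g a d
  (ex_RInt_scal (V:=R_NormedModule) f a d u Hf) Hg). Qed.

Lemma cont_lin c d x : continuous (fun t => c * (d - t)) x.
Proof. apply continuity_pt_filterlim. apply derivable_continuous_pt.
exists (-c). apply is_derive_Reals. apply lin_deriv. Qed.

Lemma cont_G c d p x : 0 < p -> continuous (fun t => rpow (c * (d - t)) p) x.
Proof. intros Hp. apply (continuous_comp (fun t => c * (d - t)) (fun y => rpow y p)).
apply cont_lin. apply rpow_cont; auto. Qed.

Lemma ex_zero (f : R -> R) a d : (forall x, Rmin a d < x < Rmax a d -> f x = 0) -> ex_RInt f a d.
Proof. intros H. apply ex_RInt_ext with (fun _ => 0). intros x Hx; symmetry; auto.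
apply ex_RInt_const. Qed.

Lemma RInt_zero' (f : R -> R) a d : (forall x, Rmin a d < x < Rmax a d -> f x = 0) -> RInt f a d = 0.
Proof. intros H. rewrite (RInt_ext f (fun _ => 0)). apply RInt_zero. exact H. Qed.

Theorem mainTheorem6 (b : R) (h : R -> R) (alpha beta : R)
  (hb : 0 < b)
  (hnonneg : forall t, 0 <= t <= b -> 0 <= h t)
  (hconc : concave_on 0 b h)
  (hnz : exists t, 0 <= t <= b /\ h t <> 0)
  (halpha : 0 < alpha) (hbeta : 0 < beta) :
  let m := galpha alpha b h in
  exists gamma delta c : R,
    gamma < delta /\ 0 < c /\
    (* (i) *) c * (delta - m) = h m /\
    (* (ii) *) RInt (fun t => rpow (c * (delta - t)) beta) gamma delta
               = RInt (fun t => rpow (h t) beta) 0 b /\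
    (* (iii) *) RInt (fun t => rpow (c * (delta - t)) beta) m delta
               = RInt (fun t => rpow (h t) beta) m b /\
    0 <= gamma /\ gamma <= m /\ m <= b /\ b <= delta /\
    (forall s, 0 <= s <= delta ->
       RInt (fun t => rpow (hext b h t) beta) s delta
       <= RInt (fun t => rpow (gext gamma delta c t) beta) s delta).
Proof.
intros m.
assert (hpos : forall x, 0 < x < b -> 0 < h x) by (apply h_pos; auto).
set (Fa := fun t => rpow (h t) alpha).
set (D := RInt Fa 0 b : R). set (N := RInt (fun t => t * Fa t) 0 b : R).
assert (Hm : m = N / D) by reflexivity.
assert (exFa : ex_RInt Fa 0 b) by (apply int_h; auto).
assert (exTFa : ex_RInt (fun t => t * Fa t) 0 b) by (apply int_th; auto).
assert (Dpos : 0 < D).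
{ apply int_pos; auto. intros x Hx; apply rpow_gt0; auto.
  intros x Hx; apply cont_hp with b; auto. }
assert (Npos : 0 < N).
{ apply int_pos; auto. intros x Hx. apply Rmult_lt_0_compat. lra. apply rpow_gt0; auto.
  intros x Hx. apply (continuous_mult (fun t => t) Fa). apply continuous_id.
  apply cont_hp with b; auto. }
assert (NbD : N < b * D).
{ assert (E1 : RInt (fun t => (b - t) * Fa t) 0 b = b * D - N).
  { unfold D, N. rewrite <- (RInt_lin b Fa (fun t => t * Fa t) 0 b exFa exTFa).
    apply RInt_ext. intros x _. change ((b - x) * Fa x = b * Fa x - x * Fa x). ring. }
  assert (0 < RInt (fun t => (b - t) * Fa t) 0 b).
  { apply int_pos; auto. apply (int_hq b h hb hconc (fun t => b - t) alpha halpha).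
    intros z. apply continuous_ext with (fun t => 1 * (b - t)). intros t; exact (Rmult_1_l _). apply cont_lin.
    intros x Hx. apply Rmult_lt_0_compat. lra. apply rpow_gt0; auto.
    intros x Hx. apply (continuous_mult (fun t => b - t) Fa).
    apply continuous_ext with (fun t => 1 * (b - t)). intros t; exact (Rmult_1_l _). apply cont_lin.
    apply cont_hp with b; auto. }
  lra. }
assert (Hm0 : 0 < m) by (rewrite Hm; apply Rdiv_lt_0_compat; auto).
assert (Hmb : m < b).
{ rewrite Hm. apply Rmult_lt_reg_r with D; auto. unfold Rdiv. rewrite Rmult_assoc, Rinv_l by lra. lra. }
clearbody m. clear Hm.
set (y := h m).
assert (Hy : 0 < y) by (apply hpos; lra).
set (Fb := fun t => rpow (h t) beta).
assert (exFb : ex_RInt Fb 0 b) by (apply int_h; auto).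
assert (exFbs : forall u v, 0 <= u -> u <= v -> v <= b -> ex_RInt Fb u v)
  by (intros; apply ex_sub with 0 b; auto).
set (T := RInt Fb m b : R). set (A := RInt Fb 0 b : R).
assert (HA0 : 0 <= RInt Fb 0 m) by (apply rint_ge0; [lra| apply exFbs; lra| intros; apply rpow_ge0]).
assert (HA : RInt Fb 0 m + T = A) by (apply Chas; apply exFbs; lra).
set (k := beta + 1).
assert (Hk : 0 < k) by (unfold k; lra).
set (ry := rpow y beta).
assert (Hry : 0 < ry) by (apply rpow_gt0; auto).
assert (Hyk : rpow y k = y * ry) by (apply rpow_succ; lra).
assert (HT : ry * (b - m) / k <= T).
{ set (c' := y / (b - m)).
  assert (Hc' : 0 < c') by (apply Rdiv_lt_0_compat; lra).
  assert (E1 : RInt (fun t => rpow (c' * (b - t)) beta) m b = ry * (b - m) / k).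
  { fixeq. rewrite GI_R by auto. fold k.
    replace (c' * (b - m)) with y by (unfold c'; field; lra).
    rewrite Rminus_diag, Rmult_0_r, (rpow_npos 0) by lra. rewrite Hyk. unfold c'. field. lra. }
  rewrite <- E1. apply RInt_le. lra. apply GI_ex; auto. apply exFbs; lra.
  intros t Ht. unfold Fb. apply rpow_le; auto. split.
  apply Rmult_le_pos; lra.
  assert (ch := chord b h hconc m t b ltac:(lra) ltac:(lra) ltac:(lra) ltac:(lra)).
  assert (0 <= h b) by (apply hnonneg; lra).
  unfold c'. apply Rmult_le_reg_l with (b - m). lra.
  replace ((b - m) * (y / (b - m) * (b - t))) with ((b-t) * y) by (field; lra).
  fold y in ch. nra. }
assert (HTpos : 0 < T).
{ eapply Rlt_le_trans; [|exact HT]. apply Rdiv_lt_0_compat; auto. apply Rmult_lt_0_compat; lra. }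
set (L := k * T / ry).
assert (HL : b - m <= L).
{ unfold L. apply Rmult_le_reg_r with (ry / k). apply Rdiv_lt_0_compat; auto.
  replace (k * T / ry * (ry / k)) with T by (field; lra).
  replace ((b - m) * (ry / k)) with (ry * (b - m) / k) by (field; lra). exact HT. }
assert (HLpos : 0 < L) by lra.
set (delta := m + L). set (c := y / L).
assert (Hc : 0 < c) by (apply Rdiv_lt_0_compat; auto).
set (Dp := Rpower (c * k * A) (/ k)).
assert (HDp : 0 < Dp) by apply Rpower_gt0.
set (gamma := delta - Dp / c).
exists gamma, delta, c.
set (Gb := fun t => rpow (c * (delta - t)) beta).
assert (Gform : forall u v, RInt Gb u v = (rpow (c * (delta - u)) k - rpow (c * (delta - v)) k) / (c * k)).
{ intros u v. apply GI_R; auto. }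
assert (exG : forall u v, ex_RInt Gb u v) by (intros; apply GI_ex; auto).
assert (Pd : rpow (c * (delta - delta)) k = 0).
{ rewrite Rminus_diag, Rmult_0_r. apply rpow_npos; lra. }
assert (Hcm : c * (delta - m) = y) by (unfold c, delta; field; lra).
assert (Pm : rpow (c * (delta - m)) k = y * ry) by (rewrite Hcm; exact Hyk).
assert (HAT : T <= A) by lra.
assert (HApos : 0 < A) by lra.
assert (Pg : rpow (c * (delta - gamma)) k = c * k * A).
{ replace (c * (delta - gamma)) with Dp by (unfold gamma; field; lra).
  rewrite rpow_pos by auto. unfold Dp. rewrite Rpower_mult.
  replace (/ k * k) with 1 by (field; lra). apply Rpower_1.
  apply Rmult_lt_0_compat; [apply Rmult_lt_0_compat|]; lra. }
assert (ckT : c * k * T = y * ry) by (unfold c, L; field; lra).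
assert (Hiii : RInt Gb m delta = T).
{ fixeq. rewrite Gform, Pm, Pd. rewrite <- ckT. field. lra. }
assert (Hii : RInt Gb gamma delta = A).
{ fixeq. rewrite Gform, Pg, Pd. field. lra. }
assert (Hgd : gamma < delta).
{ unfold gamma. assert (0 < Dp / c) by (apply Rdiv_lt_0_compat; auto). lra. }
assert (Hgm : gamma <= m).
{ assert (y <= Dp).
  { apply Rnot_lt_le. intros Hlt.
    assert (rpow Dp k < rpow y k) by (apply rpow_lt; lra).
    replace (c * (delta - gamma)) with Dp in Pg by (unfold gamma; field; lra).
    rewrite Pg, Hyk, <- ckT in H.
    assert (A < T). { apply Rmult_lt_reg_l with (c * k). apply Rmult_lt_0_compat; lra. lra. }
    lra. }
  unfold gamma. assert (y / c <= Dp / c) by (apply Rmult_le_compat_r; [left; apply Rinv_0_lt_compat|]; lra).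
  replace (y / c) with L in H0 by (unfold c; field; lra). unfold delta in *. lra. }
assert (Hbd : b <= delta) by (unfold delta; lra).
assert (Cl : forall t, 0 <= t <= m -> h t <= c * (delta - t)).
{ intros x Hx. apply Rnot_lt_le. intros Hgt.
  assert (Hxm : x < m). { destruct (Req_dec x m). subst x. fold y in Hgt. lra. lra. }
  assert (Hlt : forall t, m < t <= b -> h t < c * (delta - t)).
  { intros t Ht. apply Rnot_le_lt. intros Hge.
    assert (ch := chord b h hconc x m t ltac:(lra) ltac:(lra) ltac:(lra) ltac:(lra)).
    fold y in ch. rewrite <- Hcm in ch.
    assert (Id : (t - m) * (c * (delta - x)) + (m - x) * (c * (delta - t)) = (t - x) * (c * (delta - m))) by ring.
    nra. }
  assert (Pos : 0 < RInt (fun t => 1 * Gb t - Fb t) m b).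
  { apply int_pos. lra. apply ex_lin; auto. apply exFbs; lra.
    intros t Ht. unfold Gb, Fb. assert (rpow (h t) beta < rpow (c * (delta - t)) beta).
    apply rpow_lt; auto. split. apply hnonneg; lra. apply Hlt; lra. lra.
    intros t Ht. apply (continuous_minus (fun t => 1 * Gb t) Fb).
    apply continuous_ext with Gb. intros t0; exact (eq_sym (Rmult_1_l _)). apply cont_G; auto.
    apply cont_hp with b; auto; lra. }
  rewrite RInt_lin in Pos; [|auto|apply exFbs; lra].
  assert (0 <= RInt Gb b delta) by (apply rint_ge0; auto; intros; apply rpow_ge0).
  assert (RInt Gb m b + RInt Gb b delta = RInt Gb m delta) by (apply Chas; auto).
  fold T in Pos. lra. }
assert (Hg0 : 0 <= gamma).
{ apply Rnot_lt_le. intros Hneg.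
  assert (Le : RInt Fb 0 m <= RInt Gb 0 m).
  { apply RInt_le. lra. apply exFbs; lra. auto. intros t Ht. unfold Fb, Gb. apply rpow_le; auto.
    split. apply hnonneg; lra. apply Cl; lra. }
  rewrite Gform in Le.
  assert (E2 : RInt Fb 0 m = (rpow (c * (delta - gamma)) k - rpow (c * (delta - m)) k) / (c*k)).
  { rewrite Pg, Pm, <- ckT. assert (X : (c*k*A - c*k*T)/(c*k) = A - T) by (field; lra). rewrite X. lra. }
  rewrite E2 in Le.
  assert (rpow (c * (delta - 0)) k < rpow (c * (delta - gamma)) k).
  { apply rpow_lt; auto. split. apply Rmult_le_pos; lra. apply Rmult_lt_compat_l; lra. }
  assert (Hck : 0 < c * k) by (apply Rmult_lt_0_compat; lra).
  apply Rmult_le_compat_r with (r := c * k) in Le; [|lra].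
  unfold Rdiv in Le. rewrite !Rmult_assoc, !Rinv_l in Le by lra. lra. }
split; [exact Hgd|]. split; [exact Hc|]. split; [exact Hcm|].
split; [fold Gb; rewrite Hii; reflexivity|].
split; [fold Gb; rewrite Hiii; reflexivity|].
split; [lra|]. split; [lra|]. split; [lra|]. split; [lra|].
intros s Hs.
set (Fh := fun t => rpow (hext b h t) beta).
set (Fg := fun t => rpow (gext gamma delta c t) beta).
assert (HE1 : forall s, 0 <= s <= b -> RInt Fh s delta = RInt Fb s b).
{ intros u Hu.
  assert (e1 : forall x, Rmin u b < x < Rmax u b -> Fh x = Fb x).
  { intros x Hx. rewrite Rmin_left, Rmax_right in Hx by lra. unfold Fh, Fb, hext.
    destruct (Rle_dec x b); [reflexivity|lra]. }
  assert (e2 : forall x, Rmin b delta < x < Rmax b delta -> Fh x = 0).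
  { intros x Hx. rewrite Rmin_left, Rmax_right in Hx by lra. unfold Fh, hext.
    destruct (Rle_dec x b); [lra|]. apply rpow_npos; lra. }
  rewrite <- (Chas Fh u b delta).
  rewrite (RInt_zero' Fh b delta e2). rewrite (RInt_ext Fh Fb u b e1). exact (Rplus_0_r _).
  apply ex_RInt_ext with Fb. intros x Hx; symmetry; auto. apply exFbs; lra.
  apply ex_zero; auto. }
assert (HE2 : forall s, b <= s <= delta -> RInt Fh s delta = 0).
{ intros u Hu. apply RInt_zero'. intros x Hx. rewrite Rmin_left, Rmax_right in Hx by lra.
  unfold Fh, hext. destruct (Rle_dec x b); [lra|]. apply rpow_npos; lra. }
assert (HG1 : forall s, gamma <= s <= delta -> RInt Fg s delta = RInt Gb s delta).
{ intros u Hu. apply RInt_ext. intros x Hx. rewrite Rmin_left, Rmax_right in Hx by lra.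
  unfold Fg, Gb, gext. destruct (Rlt_dec x gamma); [lra|reflexivity]. }
assert (HG2 : forall s, s <= gamma -> RInt Fg s delta = A).
{ intros u Hu.
  assert (e1 : forall x, Rmin gamma delta < x < Rmax gamma delta -> Fg x = Gb x).
  { intros x Hx. rewrite Rmin_left, Rmax_right in Hx by lra.
    unfold Fg, Gb, gext. destruct (Rlt_dec x gamma); [lra|reflexivity]. }
  assert (e2 : forall x, Rmin u gamma < x < Rmax u gamma -> Fg x = 0).
  { intros x Hx. rewrite Rmin_left, Rmax_right in Hx by lra.
    unfold Fg, gext. destruct (Rlt_dec x gamma); [|lra]. apply rpow_npos; lra. }
  rewrite <- (Chas Fg u gamma delta).
  rewrite (RInt_zero' Fg u gamma e2). rewrite (RInt_ext Fg Gb gamma delta e1). rewrite Hii. exact (Rplus_0_l _).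
  apply ex_zero; auto.
  apply ex_RInt_ext with Gb. intros x Hx; symmetry; auto. auto. }
assert (Gnn : forall u v, u <= v -> v <= delta -> 0 <= RInt Gb u v)
  by (intros; apply rint_ge0; auto; intros; apply rpow_ge0).
assert (cmp : forall u v, 0 <= u -> u <= v -> v <= b -> (forall t, u < t < v -> h t <= c * (delta - t)) ->
   RInt Fb u v <= RInt Gb u v).
{ intros u v H1 H2 H3 H4. apply RInt_le; auto. intros t Ht. unfold Fb, Gb. apply rpow_le; auto.
  split. apply hnonneg; lra. apply H4; auto. }
destruct (Rle_dec m s) as [Hms|Hms].
- rewrite HG1 by lra.
  destruct (Rle_dec b s) as [Hbs|Hbs].
  + rewrite HE2 by lra. apply Gnn; lra.
  + rewrite HE1 by lra.
    destruct (Rle_dec (c * (delta - s)) (h s)) as [Hge|Hlt].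
    * assert (c1 : RInt Gb m s <= RInt Fb m s).
      { apply RInt_le. lra. auto. apply exFbs; lra. intros t Ht. unfold Fb, Gb. apply rpow_le; auto.
        split. apply Rmult_le_pos; lra.
        assert (ch := chord b h hconc m t s ltac:(lra) ltac:(lra) ltac:(lra) ltac:(lra)).
        fold y in ch. rewrite <- Hcm in ch.
        assert (Id : (s - t) * (c * (delta - m)) + (t - m) * (c * (delta - s)) = (s - m) * (c * (delta - t))) by ring.
        nra. }
      assert (RInt Fb m s + RInt Fb s b = T) by (apply Chas; apply exFbs; lra).
      assert (RInt Gb m s + RInt Gb s delta = RInt Gb m delta) by (apply Chas; auto).
      lra.
    * assert (c1 : RInt Fb s b <= RInt Gb s b).
      { apply cmp; try lra. intros t Ht. apply Rnot_lt_le. intros Hgt.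
        assert (ch := chord b h hconc m s t ltac:(lra) ltac:(lra) ltac:(lra) ltac:(lra)).
        fold y in ch. rewrite <- Hcm in ch.
        assert (Id : (t - s) * (c * (delta - m)) + (s - m) * (c * (delta - t)) = (t - m) * (c * (delta - s))) by ring.
        nra. }
      assert (RInt Gb s b + RInt Gb b delta = RInt Gb s delta) by (apply Chas; auto).
      assert (0 <= RInt Gb b delta) by (apply Gnn; lra). lra.
- destruct (Rle_dec gamma s) as [Hgs|Hgs].
  + rewrite HG1 by lra. rewrite HE1 by lra.
    assert (RInt Fb s m + RInt Fb m b = RInt Fb s b) by (apply Chas; apply exFbs; lra).
    assert (RInt Gb s m + RInt Gb m delta = RInt Gb s delta) by (apply Chas; auto).
    assert (RInt Fb s m <= RInt Gb s m) by (apply cmp; try lra; intros; apply Cl; lra).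
    fold T in H. lra.
  + rewrite HG2 by lra. rewrite HE1 by lra.
    assert (RInt Fb 0 s + RInt Fb s b = A) by (apply Chas; apply exFbs; lra).
    assert (0 <= RInt Fb 0 s) by (apply rint_ge0; [lra| apply exFbs; lra| intros; apply rpow_ge0]).
    lra.
Qed.
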